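(* Let $G$ be a finite group and $K$ a field in which $|G|$ is invertible. Let $V\le G$ and let $(f_U)_{U\in\widehat\Sigma_G}=\sigma_G(\Delta(e_V))$. If $U\in\widehat\Sigma_G$ is not isomorphic to $V$ then $f_U=0$. If $U\in\widehat\Sigma_G$ is isomorphic to $V$ then $f_U$ is the projection of $K\overline{\mathrm{Inj}}(U,G)=\bigoplus_{C}K\overline{\mathrm{Inj}}(U,G)_C$ onto the summand indexed by the $G$-conjugacy class $C$ of $V$, where $C$ runs over the $G$-conjugacy classes of subgroups of $G$ isomorphic to $U$ and $K\overline{\mathrm{Inj}}(U,G)_C$ is spanned by the $[\lambda]$ with $\lambda(U)\in C$.
   Context: $B(G)$ is the Burnside ring with marks $\Phi_H([X])=|X^H|$; $e_V\in KB(G)$ is the element with $\Phi_{V'}(e_V)=1$ if $V'$ is $G$-conjugate to $V$ and $0$ otherwise. Finite $(G,G)$-bisets are left $G\times G$-sets via $(g,h)x=gxh^{-1}$; $B^\Delta(G,G)$ is the Grothendieck ring (product induced by $X\times_G Y$) of bisets whose point stabilizers $L$ satisfy $\{g\mid(g,1)\in L\}=\{g\mid(1,g)\in L\}=1$; $\Phi_L$ denotes marks on $G\times G$-sets. $\Delta\colon KB(G)\to KB^\Delta(G,G)$ is the $K$-linear ring homomorphism $[G/W]\mapsto[G\times G/\{(w,w)\mid w\in W\}]$. $\mathrm{Inj}(U,G)$: injective homomorphisms $U\to G$ with $G$ acting by $\lambda\mapsto c_g\lambda$ and $\mathrm{Aut}(U)$ on the right by composition; $\overline{\mathrm{Inj}}(U,G)=G\backslash\mathrm{Inj}(U,G)$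 (elements $[\lambda]$), a right $\mathrm{Out}(U)$-set. $\widehat\Sigma_G$: representatives of isomorphism classes of subgroups of $G$. $\sigma_G\colon KB^\Delta(G,G)\to\prod_{U\in\widehat\Sigma_G}\mathrm{End}_{K\mathrm{Out}(U)}(K\overline{\mathrm{Inj}}(U,G))$ is $a\mapsto\bigl([\mu]\mapsto\sum_{[\lambda]\in\overline{\mathrm{Inj}}(U,G)}\frac{\Phi_{\{(\lambda(u),\mu(u))\mid u\in U\}}(a)}{|C_G(\lambda(U))|}[\lambda]\bigr)_U$. *)

(* Defs.v *)
From HB Require Import structures.
From mathcomp Require Import all_boot all_order all_fingroup all_algebra.
Set Implicit Arguments. Unset Strict Implicit. Unset Printing Implicit Defensive.
Import GRing.Theory.
Local Open Scope ring_scope.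

(* The finite group G is modelled as the whole of a finGroupType gT
   (G = [set: gT]); subgroups of G are the {group gT}.
   G x G is the external direct product group (gT * gT). *)

Section Defs.
Variable gT : finGroupType.
Variable K : fieldType.

(* Marks on G-sets / (G x G)-sets: |(A/W)^H| for the left coset space A/W
   (A the whole group) with action by left multiplication. *)
Definition markG (hT : finGroupType) (H W : {set hT}) : nat :=
  #|[set C in lcosets W [set: hT] | [forall h in H, (h *: C)%g == C]]|.

(* An element of KB(G) is represented by coefficients c, standing for
   sum_W c W [G/W].  Its mark at H: *)
Definition PhiB (c : {group gT} -> K) (H : {set gT}) : K :=
  \sum_(W : {group gT}) c W * (markG H W)%:R.

Definition is_eV (V : {group gT}) (c : {group gT} -> K) : Prop :=
  forall H : {group gT},
    PhiB c H = if (H : {set gT}) \in (V :^: [set: gT])%g then 1 else 0.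

Definition diagS (W : {set gT}) : {set (gT * gT)} := [set (w, w) | w in W].

(* Marks of Delta(c) = sum_W c W [G x G / Delta(W)] at L. *)
Definition PhiDelta (c : {group gT} -> K) (L : {set (gT * gT)}) : K :=
  \sum_(W : {group gT}) c W * (markG L (diagS W))%:R.

(* Inj(U,G): injective homomorphisms U -> G, represented as finite functions
   on gT normalised to be 1 outside U. *)
Definition Inj (U : {set gT}) : {set {ffun gT -> gT}} :=
  [set l : {ffun gT -> gT} |
    [&& [forall x in U, forall y in U, l (x * y)%g == (l x * l y)%g],
        [forall x in U, forall y in U, (l x == l y) ==> (x == y)] &
        [forall x in ~: U, l x == 1%g]]].

Definition injorb (U : {set gT}) (l : {ffun gT -> gT}) : {set {ffun gT -> gT}} :=
  [set l' in Inj U | [exists g : gT, [forall u in U, l' u == ((l u) ^ (g^-1))%g]]].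

Definition injbar (U : {set gT}) : {set {set {ffun gT -> gT}}} :=
  [set injorb U l | l in Inj U].

Definition orep (O : {set {ffun gT -> gT}}) : {ffun gT -> gT} :=
  odflt [ffun x => x] [pick l in O].

Definition graphS (U : {set gT}) (l m : {ffun gT -> gT}) : {set (gT * gT)} :=
  [set (l u, m u) | u in U].

(* coefficient of [lambda] in sigma_G(Delta c)_U ([mu]) *)
Definition sigma_coef (c : {group gT} -> K) (U : {set gT}) (l m : {ffun gT -> gT}) : K :=
  PhiDelta c (graphS U l m) / (#|'C(l @: U)%g|)%:R.

(* The U-component f_U of sigma_G(Delta c), as a K-linear endomorphism of
   K\overline{Inj}(U,G); a vector is a finite function on orbits
   (only its values on injbar U matter). *)
Definition sigmaU (c : {group gT} -> K) (U : {set gT})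
    (x : {ffun {set {ffun gT -> gT}} -> K}) : {ffun {set {ffun gT -> gT}} -> K} :=
  [ffun O => if O \in injbar U then
      \sum_(O' in injbar U) x O' * sigma_coef c U (orep O) (orep O')
    else 0].

Definition projV (V : {set gT}) (U : {set gT})
    (x : {ffun {set {ffun gT -> gT}} -> K}) : {ffun {set {ffun gT -> gT}} -> K} :=
  [ffun O => if (O \in injbar U) && ((orep O @: U) \in (V :^: [set: gT])%g)
             then x O else 0].

End Defs.

(* Main.v *)
Require Import Defs.
From mathcomp Require Import all_boot all_order all_fingroup all_algebra.
Set Implicit Arguments. Unset Strict Implicit. Unset Printing Implicit Defensive.
Open Scope group_scope.

Lemma fixE (hT : finGroupType) (W : {group hT}) y h :
  (h *: (y *: W) == y *: W) = (h ^ y \in W).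
Proof.
rewrite -lcosetM; apply/eqP/idP => [/lcoset_eqP | H].
  by rewrite mem_lcoset conjgE.
by apply/lcoset_eqP; rewrite mem_lcoset -conjgE.
Qed.

Lemma markG_card (hT : finGroupType) (H : {set hT}) (W : {group hT}) :
  muln (markG H W) #|W| = #|[set x : hT | [forall h in H, h ^ x \in W]]|.
Proof.
set S := [set x : hT | _].
have SW y w : w \in W -> (y * w \in S) = (y \in S).
  move=> Ww; rewrite !inE; apply: eq_forallb => h;
  by rewrite conjgM (groupJr _ Ww).
rewrite -[RHS]sum1_card (partition_big_imset (fun x => x *: W)) /=.
rewrite (eq_bigr (fun _ => #|W|)); last first.
  move=> _ /imsetP[y Sy ->].
  rewrite -(card_lcoset W y) -sum1_card; apply: eq_bigl => x.
  apply/andP/idP => [[_ /eqP/lcoset_eqP] //| xy]; split; last first.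
    by apply/eqP/lcoset_eqP.
  by case/lcosetP: xy => w Ww ->; rewrite SW.
rewrite sum_nat_const /markG; congr muln; apply: eq_card => C.
apply/idP/imsetP; last first.
  move=> [y Sy ->].
  rewrite inE; apply/andP; split; first by apply/lcosetsP; exists y.
  by apply/forall_inP => h Hh; rewrite fixE; move: Sy; rewrite inE => /forall_inP; apply.
rewrite inE => /andP[/lcosetsP[y _ ->] /forall_inP fx]; exists y => //.
by rewrite inE; apply/forall_inP => h Hh; rewrite -fixE; apply: fx.
Qed.

Section Key.
Variable gT : finGroupType.

Lemma diag_group_set (W : {group gT}) : group_set (diagS W).
Proof.
apply/group_setP; split; first by apply/imsetP; exists 1.
move=> _ _ /imsetP[x Wx ->] /imsetP[y Wy ->].
by apply/imsetP; exists (x * y) => //; rewrite groupM.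
Qed.

Definition diagG (W : {group gT}) := Group (diag_group_set W).

Lemma mem_diag (W : {set gT}) x y : ((x, y) \in diagS W) = (x == y) && (x \in W).
Proof.
apply/imsetP/andP => [[w Ww [-> ->]] // | [/eqP -> Wy]]; by exists y.
Qed.

Lemma card_diag (W : {set gT}) : #|diagS W| = #|W|.
Proof. by rewrite card_imset // => x y [->]. Qed.

Lemma forall_imset (aT rT : finType) (f : aT -> rT) (U : {set aT}) (P : pred rT) :
  [forall h in f @: U, P h] = [forall u in U, P (f u)].
Proof.
apply/forall_inP/forall_inP => H u Hu; first by apply: H; apply: imset_f.
by case/imsetP: Hu => v Uv ->; apply: H.
Qed.

Definition Tset (U : {set gT}) (l m : gT -> gT) :=
  [set g : gT | [forall u in U, m u == (l u) ^ (g^-1)]].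

Lemma markG_graph (U : {set gT}) (l m : {ffun gT -> gT}) (W : {group gT}) :
  markG (graphS U l m) (diagS W) = muln (markG (l @: U) W) #|Tset U l m|.
Proof.
have W0 : 0 < #|W| by rewrite cardG_gt0.
apply/eqP; rewrite -(eqn_pmul2r W0) mulnAC; apply/eqP.
rewrite markG_card -[X in muln _ X]card_diag (markG_card _ (diagG W)) -cardsX.
rewrite -(card_imset _ (@can_inj _ _ (fun p : gT * gT => (p.1, p.2 * p.1)) (fun p : gT * gT => (p.1, p.2 * p.1^-1)) _)); last first.
  by case=> a g /=; rewrite mulgK.
rewrite (can2_imset_pre _ (g := fun p : gT * gT => (p.1, p.2 * p.1^-1))); last 2 first.
- by case=> a g /=; rewrite mulgK.
- by case=> a g /=; rewrite mulgKV.
apply: eq_card => -[a b]; rewrite !inE /= forall_imset forall_imset.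
have E u : ((l u, m u) ^ (a, b) \in diagS W) = (l u ^ a \in W) && (m u == l u ^ (b * a^-1)^-1).
  rewrite (_ : (l u, m u) ^ (a, b) = (l u ^ a, m u ^ b)) //.
  rewrite mem_diag invMg invgK conjgM andbC; congr andb.
  by rewrite [RHS]eq_sym -[RHS](inj_eq (conjg_inj b)) conjgKV.
apply/forall_inP/andP => [H|[/forall_inP H1 /forall_inP H2]].
  by split; apply/forall_inP => u Uu; have := H u Uu; rewrite E => /andP[].
by move=> u Uu; rewrite E H1 ?H2.
Qed.
Lemma commuteE (x y : gT) : commute x y <-> x ^ y = x.
Proof. by split => [/commgP/conjg_fixP | /conjg_fixP/commgP]. Qed.

Lemma card_Tset (U : {set gT}) (l m : {ffun gT -> gT}) g0 :
  g0 \in Tset U l m -> #|Tset U l m| = #|'C(l @: U)|.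
Proof.
rewrite /Tset inE => /forall_inP Hg0.
rewrite -(card_lcoset 'C(l @: U) g0); apply: eq_card => g.
rewrite /Tset inE mem_lcoset; apply/forall_inP/centP => [H _ /imsetP[u Uu ->] | H u Uu].
  apply/commute_sym/commuteE; rewrite conjgM; apply/eqP.
  by rewrite -(inj_eq (conjg_inj (g^-1))) conjgK -(eqP (H u Uu)) (eqP (Hg0 u Uu)).
rewrite (eqP (Hg0 u Uu)) -(inj_eq (conjg_inj g)) conjgKV -conjgM.
by apply/eqP/commuteE/commute_sym/H/imset_f.
Qed.

Lemma InjP (U : {set gT}) (l : {ffun gT -> gT}) : l \in Inj U ->
  {in U &, forall x y, l (x * y) = l x * l y} /\ {in U &, injective l}.
Proof.
rewrite inE => /and3P[/forall_inP M /forall_inP I _]; split.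
  by move=> x y Ux Uy; apply/eqP; move/forall_inP: (M x Ux); apply.
by move=> x y Ux Uy E; move/forall_inP: (I x Ux) => /(_ y Uy); rewrite E eqxx => /eqP.
Qed.

Lemma Inj1 (U : {group gT}) (l : {ffun gT -> gT}) : l \in Inj U -> l 1 = 1.
Proof.
case/InjP => M _; have := M 1 1 (group1 U) (group1 U); rewrite mulg1.
by move=> H; apply: (mulgI (l 1)); rewrite mulg1 -H.
Qed.

Lemma Inj_group_set (U : {group gT}) (l : {ffun gT -> gT}) : l \in Inj U -> group_set (l @: U).
Proof.
move=> lI; have [M _] := InjP lI.
apply/group_setP; split; first by apply/imsetP; exists 1; rewrite ?(Inj1 lI).
move=> _ _ /imsetP[x Ux ->] /imsetP[y Uy ->].
by apply/imsetP; exists (x * y); rewrite ?groupM ?M.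
Qed.

Lemma Inj_isog (U : {group gT}) (l : {ffun gT -> gT}) (lI : l \in Inj U) :
  U \isog Group (Inj_group_set lI).
Proof.
have [M I] := InjP lI; have l1 := Inj1 lI.
apply: (@misom_isog _ _ _ _ l); apply/andP; split; first by apply/morphicP.
apply/eqP/setP => y; rewrite /= !inE.
apply/imsetP/andP => [[x /setD1P[x1 Ux] ->] | [y1 /imsetP[x Ux Ey]]].
  split; last by apply: imset_f.
  move: x1; apply: contra => /eqP lx; apply/eqP/I => //; by rewrite lx l1.
exists x; rewrite // inE Ux andbT; move: y1; apply: contra => /set1P x1.
by rewrite Ey x1 l1.
Qed.

Local Notation orep := (@orep gT).
Definition Rel (U : {set gT}) (l l' : {ffun gT -> gT}) :=
  [exists g : gT, [forall u in U, l' u == ((l u) ^ (g^-1))]].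

Lemma RelT U l l' : Rel U l l' = (Tset U l l' != set0).
Proof.
apply/existsP/set0Pn => [[g Hg] | [g Hg]]; exists g; by rewrite ?inE in Hg *.
Qed.

Lemma Rel_refl U l : Rel U l l.
Proof. by apply/existsP; exists 1; apply/forall_inP => u _; rewrite invg1 conjg1. Qed.

Lemma Rel_sym U l l' : Rel U l l' -> Rel U l' l.
Proof.
case/existsP => g /forall_inP H; apply/existsP; exists g^-1; apply/forall_inP => u Uu.
by rewrite (eqP (H u Uu)) invgK conjgKV.
Qed.

Lemma Rel_trans U l1 l2 l3 : Rel U l1 l2 -> Rel U l2 l3 -> Rel U l1 l3.
Proof.
case/existsP => g /forall_inP H; case/existsP => h /forall_inP H'.
apply/existsP; exists (h * g); apply/forall_inP => u Uu.
by rewrite (eqP (H' u Uu)) (eqP (H u Uu)) invMg conjgM.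
Qed.

Lemma injorbE U l l' : (l' \in injorb U l) = (l' \in Inj U) && Rel U l l'.
Proof. by rewrite inE. Qed.

Lemma injorb_eq U l l' : l \in Inj U -> l' \in Inj U ->
  (injorb U l == injorb U l') = Rel U l l'.
Proof.
move=> lI l'I; apply/eqP/idP => [E | R].
  by have := Rel_refl U l'; rewrite -[Rel U l' l']andTb -l'I -injorbE -E injorbE => /andP[].
apply/setP => f; rewrite !injorbE; case: (f \in Inj U) => //=.
apply/idP/idP => [R1 | R2]; first exact: Rel_trans (Rel_sym R) R1.
exact: Rel_trans R R2.
Qed.

Lemma orep_in U O : O \in injbar U -> orep O \in O.
Proof.
case/imsetP => l lI ->; rewrite /orep; case: pickP => [f -> //|].
by move/(_ l); rewrite injorbE lI Rel_refl.
Qed.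

Lemma orep_Inj U O : O \in injbar U -> orep O \in Inj U.
Proof.
move=> OI; have := orep_in OI; case/imsetP: OI => l _ ->.
by rewrite injorbE => /andP[].
Qed.

Lemma Rel_orep U O O' : O \in injbar U -> O' \in injbar U ->
  Rel U (orep O) (orep O') = (O == O').
Proof.
move=> OI O'I; have := orep_in OI; have := orep_in O'I.
case/imsetP: OI => l lI ->; case/imsetP: O'I => l' l'I ->.
rewrite !injorbE => /andP[_ R'] /andP[_ R].
rewrite injorb_eq //; apply/idP/idP => H.
  exact: Rel_trans R (Rel_trans H (Rel_sym R')).
exact: Rel_trans (Rel_sym R) (Rel_trans H R').
Qed.

End Key.

Section Main.
Import GRing.Theory.
Local Open Scope ring_scope.
Variable gT : finGroupType.
Variable K : fieldType.
Local Notation orep := (@orep gT).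

Lemma PhiDelta_graph (c : {group gT} -> K) U (l m : {ffun gT -> gT}) :
  PhiDelta c (graphS U l m) = (#|Tset U l m|)%:R * PhiB c (l @: U).
Proof.
rewrite /PhiDelta /PhiB mulr_sumr; apply: eq_bigr => W _.
by rewrite markG_graph natrM [_ * (#|_|)%:R]mulrC mulrCA.
Qed.

Lemma card_neq0 (hG : (#|[set: gT]|%:R : K) != 0) (H : {group gT}) :
  (#|H|%:R : K) != 0.
Proof.
have /dvdnP[k E] := cardSg (subsetT H).
by apply: contraNneq hG => H0; rewrite E natrM H0 mulr0.
Qed.

Lemma sigma_coef_eq (hG : (#|[set: gT]|%:R : K) != 0) (V : {group gT})
   (c : {group gT} -> K) (hc : is_eV V c) (U : {group gT}) (l m : {ffun gT -> gT}) :
  l \in Inj U ->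
  sigma_coef c U l m =
    if Rel U l m then (if (l @: U) \in (V :^: [set: gT])%g then 1 else 0) else 0.
Proof.
move=> lI; rewrite /sigma_coef PhiDelta_graph RelT.
case: (eqVneq (Tset U l m) set0) => [->|/set0Pn[g0 Hg]]; first by rewrite cards0 !mul0r.
rewrite (card_Tset Hg).
have := hc (Group (Inj_group_set lI)); rewrite /= => ->.
rewrite mulrAC mulfV ?mul1r //.
exact: (card_neq0 hG [group of 'C(l @: U)]).
Qed.

End Main.

Import GRing.Theory.
Local Open Scope ring_scope.

Theorem proposition3p7 (gT : finGroupType) (K : fieldType)
    (hG : (#|[set: gT]|%:R : K) != 0)
    (V : {group gT}) (c : {group gT} -> K) (hc : is_eV V c) :
  forall U : {group gT},
    (~~ (U \isog V) -> forall x, sigmaU c U x = [ffun => 0]) /\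
    (U \isog V -> forall x, sigmaU c U x = projV V U x).
Proof.
move=> U.
have key x : sigmaU c U x = projV V U x.
  apply/ffunP => O; rewrite !ffunE.
  case OI: (O \in injbar U) => //=.
  rewrite (bigD1 O) //= big1 ?addr0.
    rewrite (sigma_coef_eq hG hc _ (orep_Inj OI)) Rel_refl.
    by case: ifP => _; rewrite ?mulr1 ?mulr0.
  move=> O' /andP[O'I nO].
  by rewrite (sigma_coef_eq hG hc _ (orep_Inj OI)) Rel_orep // eq_sym (negbTE nO) mulr0.
split => [nI x|_ x]; last exact: key.
rewrite key; apply/ffunP => O; rewrite !ffunE.
case: ifP => // /andP[OI /imsetP[g _ E]].
case/negP: nI; have h := Inj_isog (orep_Inj OI).
have e : Group (Inj_group_set (orep_Inj OI)) = (V :^ g)%G by apply: val_inj.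
rewrite e in h; apply: isog_trans h _; rewrite isog_sym; exact: conj_isog.
Qed.
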